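(* Let $K$ be a field of characteristic zero. For $0\le i\le n$ let $E_i$ denote the injective hull of $K$ over $K[X_1,\ldots,X_i]$ (with $E_0=K$), with its natural module structure over the Weyl algebra $A_i(K)$. Then for each $c=1,\ldots,n$, \[H_i(\partial_c,\partial_{c+1},\ldots,\partial_n;E_n)=\begin{cases}0 & i>0,\\ E_{c-1}& i=0,\end{cases}\] where the isomorphism for $i=0$ is as $A_{c-1}(K)$-modules.
   Context: $E_i=\bigoplus_{r_1,\ldots,r_i\ge0}K\,\frac{1}{X_1\cdots X_iX_1^{r_1}\cdots X_i^{r_i}}$, where $X_j$ lowers $r_j$ by one (giving $0$ if $r_j=0$) and $\partial_j$ sends the basis element with exponent $r_j$ to $(-r_j-1)$ times the basis element with $r_j$ replaced by $r_j+1$. $H_i(\partial_c,\ldots,\partial_n;N)$ is the $i$-th Koszul homology of $N$ with respect to the commuting $K$-linear maps $\partial_c,\ldots,\partial_n$; it is a module over $A_{c-1}(K)=K\langle X_1,\ldots,X_{c-1},\partial_1,\ldots,\partial_{c-1}\rangle$. *)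

(* Defs.v *)
From HB Require Import structures.
From mathcomp Require Import all_boot all_order all_algebra.
From mathcomp Require Import mpoly.
Set Implicit Arguments. Unset Strict Implicit. Unset Printing Implicit Defensive.
Import Order.TTheory GRing.Theory.
Local Open Scope ring_scope.

(* Model of E_n (as in the paper's context):
     E_n = (+)_{r in N^n} K * 1/(X_1..X_n X_1^{r_1}..X_n^{r_n}).
   The basis element with exponent vector r is encoded as the monomial 'X_[r]
   of {mpoly K[n]}; so an element of E_n is a finitely supported family of
   coefficients indexed by r : 'X_{1..n}.  E_0 = {mpoly K[0]} = K. *)
Definition Emod (K : fieldType) (n : nat) := {mpoly K[n]}.

(* Variables are 0-indexed: index j (j < n) stands for X_{j+1}, d_{j+1}. *)

Definition mexp (n : nat) (r : 'X_{1..n}) (j : nat) : nat := nth 0%N (multinom_val r) j.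

Definition unit_mnm (n j : nat) : 'X_{1..n} := [multinom (i == j :> nat) : nat | i < n].

Definition Xop (K : fieldType) (n j : nat) (p : Emod K n) : Emod K n :=
  \sum_(r <- msupp p)
     (if (0 < mexp r j)%N then p@_r *: 'X_[(r - unit_mnm n j)%MM] else 0).

Definition Dop (K : fieldType) (n j : nat) (p : Emod K n) : Emod K n :=
  \sum_(r <- msupp p)
     (p@_r * (- (mexp r j).+1%:R)) *: 'X_[(r + unit_mnm n j)%MM].

(* Koszul complex of N with respect to k commuting K-linear maps phi_0..phi_{k-1}:
   K_*(phi; N) = N (x) Lambda^* K^k, an element being a family indexed by subsets
   T of {0..k-1} (coefficient of e_T); it lies in degree i iff it is supported on
   subsets of size i.  The differential is
     d (x e_S) = \sum_{j in S} (-1)^{#{l in S | l < j}} phi_j(x) e_{S \ j}. *)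
Definition kchain (K : fieldType) (N : lmodType K) (k : nat) := {ffun {set 'I_k} -> N}.

Definition kdeg (K : fieldType) (N : lmodType K) (k : nat) (i : nat)
    (x : kchain N k) : Prop :=
  forall T : {set 'I_k}, #|T| != i -> x T = 0.

Definition kdiff (K : fieldType) (N : lmodType K) (k : nat) (phi : 'I_k -> N -> N)
    (x : kchain N k) : kchain N k :=
  [ffun T : {set 'I_k} =>
     \sum_(j : 'I_k | j \notin T)
        (-1) ^+ #|[set l in T | (l < j)%N]| *: phi j (x (j |: T))].

Definition koszul_H_vanish (K : fieldType) (N : lmodType K) (k : nat)
    (phi : 'I_k -> N -> N) (i : nat) : Prop :=
  forall x : kchain N k, kdeg i x -> kdiff phi x = 0 ->
    exists y : kchain N k, kdeg i.+1 y /\ kdiff phi y = x.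

(* 0-boundaries of K_*(phi;N), seen in K_0 = N (the coefficient of e_emptyset) *)
Definition koszul_B0 (K : fieldType) (N : lmodType K) (k : nat)
    (phi : 'I_k -> N -> N) (v : N) : Prop :=
  exists y : kchain N k, kdeg 1 y /\ kdiff phi y set0 = v.

(* The family d_c, ..., d_n on E_n (1-indexed), i.e. 0-indexed c-1, ..., n-1 *)
Definition dfamily (K : fieldType) (n c : nat) : 'I_(n - c).+1 -> Emod K n -> Emod K n :=
  fun t => @Dop K n (c.-1 + t).

(* Main.v *)
Require Import Defs.
From HB Require Import structures.
From mathcomp Require Import all_boot all_order all_algebra zify.
From mathcomp Require Import mpoly ring.
Set Implicit Arguments. Unset Strict Implicit. Unset Printing Implicit Defensive.
Import Order.TTheory GRing.Theory.
Local Open Scope ring_scope.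

Section Shape.
Variables (K : fieldType) (n n' : nat).

Definition shop (a : 'X_{1..n} -> K) (s : 'X_{1..n} -> 'X_{1..n'}) (p : {mpoly K[n]}) : {mpoly K[n']} :=
  \sum_(r <- msupp p) (p@_r * a r) *: 'X_[s r].

Lemma shopE a s t (p : {mpoly K[n]}) m :
  (forall r, s r = m -> a r != 0 -> r = t m) ->
  (shop a s p)@_m = p@_(t m) * a (t m) * (s (t m) == m)%:R.
Proof.
move=> H; rewrite /shop raddf_sum.
rewrite (eq_bigr (fun r => p@_r * a r * (s r == m)%:R)); last first.
  by move=> r _ /=; rewrite mcoeffZ mcoeffX.
have -> : \sum_(r <- msupp p) p@_r * a r * (s r == m)%:R =
          \sum_(r <- msupp p) (r == t m)%:R * (p@_(t m) * a (t m) * (s (t m) == m)%:R).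
  apply: eq_bigr => r _; case: (eqVneq r (t m)) => [->|ne]; first by rewrite mul1r.
  rewrite mul0r; case: (eqVneq (s r) m) => [e|]; last by rewrite mulr0.
  case: (eqVneq (a r) 0) => [->|anz]; first by rewrite mulr0 mul0r.
  by move: ne; rewrite (H r e anz) eqxx.
rewrite -big_distrl /= -natr_sum.
have -> : (\sum_(r <- msupp p) (r == t m))%N = (t m \in msupp p).
  rewrite -(count_uniq_mem (t m) (msupp_uniq p)) -sum1_count [RHS]big_mkcond.
  by apply: eq_bigr => r _ /=; case: (r == t m).
case: (boolP (t m \in msupp p)) => [_|notin]; first by rewrite mul1r.
by move: notin; rewrite -mcoeff_eq0 => /eqP ->; rewrite mul0r !mul0r.
Qed.

Lemma shop_lin a s t : (forall m r, s r = m -> a r != 0 -> r = t m) -> linear (shop a s).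
Proof.
move=> H c p q; apply/mpolyP => m.
by rewrite mcoeffD mcoeffZ !(@shopE a s t _ m (H m)) mcoeffD mcoeffZ; ring.
Qed.
End Shape.
Section Mexp.
Variable n : nat.
Implicit Types m : 'X_{1..n}.

Lemma mexp_ord m (i : 'I_n) : mexp m i = m i.
Proof. by rewrite /mexp (mnm_nth 0%N). Qed.

Lemma mexp_out m i : (n <= i)%N -> mexp m i = 0%N.
Proof. by move=> h; rewrite /mexp nth_default // size_tuple. Qed.

Lemma mexp_mk (E : 'I_n -> nat) i (h : (i < n)%N) :
  mexp [multinom E j | j < n] i = E (Ordinal h).
Proof. by rewrite -[X in mexp _ X]/(nat_of_ord (Ordinal h)) mexp_ord mnmE. Qed.

Lemma mexpD m1 m2 i : mexp (m1 + m2)%MM i = (mexp m1 i + mexp m2 i)%N.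
Proof.
case: (ltnP i n) => h; last by rewrite !mexp_out.
by rewrite -[i]/(nat_of_ord (Ordinal h)) !mexp_ord mnmDE.
Qed.

Lemma mexpB m1 m2 i : mexp (m1 - m2)%MM i = (mexp m1 i - mexp m2 i)%N.
Proof.
case: (ltnP i n) => h; last by rewrite !mexp_out.
by rewrite -[i]/(nat_of_ord (Ordinal h)) !mexp_ord mnmBE.
Qed.

Lemma mexpU j i : mexp (unit_mnm n j) i = ((i == j) && (i < n))%N.
Proof.
case: (ltnP i n) => h; last by rewrite !mexp_out // andbF.
by rewrite -[i]/(nat_of_ord (Ordinal h)) !mexp_ord mnmE andbT.
Qed.

Lemma mnm_ext m1 m2 : (forall i, (i < n)%N -> mexp m1 i = mexp m2 i) -> m1 = m2.
Proof. by move=> h; apply/mnmP => i; rewrite -!mexp_ord h. Qed.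

End Mexp.

Section Ops.
Variables (K : fieldType) (n : nat).
Implicit Types (p : {mpoly K[n]}) (m : 'X_{1..n}).

Definition ee j := unit_mnm n j.

Lemma mexpU' j i : (j < n)%N -> mexp (ee j) i = (i == j).
Proof. by move=> hj; rewrite /ee mexpU; case: eqP => [->|]; rewrite ?hj. Qed.

Ltac mx hj := apply: mnm_ext => ? _; rewrite ?(mexpD, mexpB, (mexpU' _ hj));
  try (case: eqP => [->|_] /=; lia).

Lemma DopE j p m : (j < n)%N ->
  (Dop j p)@_m = if (0 < mexp m j)%N then p@_(m - ee j) * - (mexp m j)%:R else 0.
Proof.
move=> hj.
rewrite (_ : Dop j p = shop (fun r => - (mexp r j).+1%:R) (fun r => r + ee j)%MM p) //.
rewrite (@shopE _ _ _ _ _ (fun m => m - ee j)%MM); last by move=> r <- _; rewrite addmK.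
case: ltnP => h.
  have -> : (m - ee j + ee j)%MM = m by mx hj.
  rewrite eqxx mulr1 mexpB mexpU eqxx hj /=.
  by congr (_ * - _); congr (_%:R); lia.
have -> : ((m - ee j + ee j)%MM == m) = false.
  apply/negbTE/eqP => /(congr1 (fun x => mexp x j)).
  rewrite mexpD mexpB mexpU' // eqxx /=; lia.
by rewrite mulr0.
Qed.

Lemma Dop_shop j : Dop (K:=K) (n:=n) j = shop (fun r => - (mexp r j).+1%:R) (fun r => r + ee j)%MM.
Proof. by []. Qed.

Lemma Xop_shop j p : Xop (K:=K) (n:=n) j p = shop (fun r => ((0 < mexp r j)%N)%:R) (fun r => r - ee j)%MM p.
Proof.
rewrite /Xop /shop; apply: eq_bigr => r _.
by case: ifP => _; rewrite ?mulr1 ?mulr0 ?scale0r.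
Qed.

Definition Lop j := shop (fun r : 'X_{1..n} => if (0 < mexp r j)%N then (- (mexp r j)%:R)^-1 else (0:K))
  (fun r => r - ee j)%MM.
Definition Pop j := shop (fun r : 'X_{1..n} => ((mexp r j == 0)%N)%:R : K) id.

Lemma XopE j p m : (j < n)%N -> (Xop j p)@_m = p@_(m + ee j).
Proof.
move=> hj; rewrite Xop_shop (@shopE _ _ _ _ _ (fun m => m + ee j)%MM); last first.
  by move=> r <-; case: (boolP (0 < mexp r j)%N) => h; [move=> _; mx hj| rewrite /= ?eqxx].
by rewrite addmK eqxx mexpD mexpU' // eqxx addn1 /= !mulr1.
Qed.

Lemma LopE j p m : (j < n)%N -> (Lop j p)@_m = p@_(m + ee j) * (- (mexp m j).+1%:R)^-1.
Proof.
move=> hj; rewrite /Lop (@shopE _ _ _ _ _ (fun m => m + ee j)%MM); last first.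
  by move=> r <-; case: (boolP (0 < mexp r j)%N) => h; [move=> _; mx hj| rewrite /= ?eqxx].
by rewrite addmK eqxx mexpD mexpU' // eqxx addn1 /= !mulr1.
Qed.

Lemma PopE j p m : (Pop j p)@_m = p@_m * ((mexp m j == 0)%N)%:R.
Proof. by rewrite /Pop (@shopE _ _ _ _ _ id) ?eqxx ?mulr1 // => r <-. Qed.

Lemma Dop_lin j : linear (Dop (K:=K) (n:=n) j).
Proof. by rewrite Dop_shop; apply: (@shop_lin _ _ _ _ _ (fun m => m - ee j)%MM) => m r <- _; rewrite addmK. Qed.

Lemma Xop_lin j : (j < n)%N -> linear (Xop (K:=K) (n:=n) j).
Proof.
move=> hj a u v; rewrite !Xop_shop; apply: (@shop_lin _ _ _ _ _ (fun m => m + ee j)%MM).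
by move=> m r <-; case: (boolP (0 < mexp r j)%N) => h; [move=> _; mx hj| rewrite /= ?eqxx].
Qed.

Lemma Lop_lin j : (j < n)%N -> linear (Lop j).
Proof.
move=> hj; apply: (@shop_lin _ _ _ _ _ (fun m => m + ee j)%MM).
by move=> m r <-; case: (boolP (0 < mexp r j)%N) => h; [move=> _; mx hj| rewrite /= ?eqxx].
Qed.

Lemma Pop_lin j : linear (Pop j).
Proof. by apply: (@shop_lin _ _ _ _ _ id) => m r <-. Qed.
End Ops.

Section Idents.
Variables (K : fieldType) (n : nat).
Hypothesis charK0 : [pchar K] =i pred0.
Implicit Types (p : {mpoly K[n]}) (m : 'X_{1..n}).

Lemma natS_neq0 k : (- (k.+1)%:R : K) != 0.
Proof. by rewrite oppr_eq0; move/pcharf0P: charK0 => ->. Qed.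

Ltac mx hj := apply: mnm_ext => ? _; rewrite ?(mexpD, mexpB, (mexpU' _ hj));
  try (case: eqP => [->|_] /=; lia).

Lemma DL j p : (j < n)%N -> Dop j (Lop j p) = p - Pop j p.
Proof.
move=> hj; apply/mpolyP => m; rewrite DopE // mcoeffB PopE.
case: (posnP (mexp m j)) => h.
  by rewrite /= mulr1 subrr.
rewrite /= mulr0 subr0 LopE //.
have -> : (m - ee n j + ee n j)%MM = m by mx hj.
have -> : (mexp (m - ee n j) j).+1 = mexp m j by rewrite mexpB mexpU' // eqxx; lia.
move: h; case: (mexp m j) => // k _.
by rewrite -mulrA mulVf ?mulr1 // natS_neq0.
Qed.

Lemma LD j p : (j < n)%N -> Lop j (Dop j p) = p.
Proof.
move=> hj; apply/mpolyP => m; rewrite LopE // DopE // mexpD mexpU' // eqxx addn1 /=.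
by rewrite addmK -mulrA mulfV ?mulr1 // natS_neq0.
Qed.

Lemma PD j p : (j < n)%N -> Pop j (Dop j p) = 0.
Proof.
move=> hj; apply/mpolyP => m; rewrite PopE DopE // mcoeff0.
by case: (posnP (mexp m j)) => h; rewrite /= ?mul0r ?mulr0.
Qed.

Lemma DLc i j p : (i < n)%N -> (j < n)%N -> i != j -> Dop i (Lop j p) = Lop j (Dop i p).
Proof.
move=> hi hj ne; apply/mpolyP => m; rewrite DopE // !LopE // DopE //.
rewrite mexpD mexpU' // (negbTE ne) addn0.
case: ifP => _; last by rewrite mul0r.
rewrite mexpB mexpU' // eq_sym (negbTE ne) subn0.
have -> : (m - ee n i + ee n j)%MM = (m + ee n j - ee n i)%MM.
  apply: mnm_ext => x _; rewrite !(mexpD, mexpB, (mexpU' _ hi), (mexpU' _ hj)).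
  case: (eqVneq x i) => [->|]; rewrite ?(negbTE ne) ?eqxx /=; first lia.
  by move=> _; lia.
by rewrite mulrAC.
Qed.

Lemma DPc i j p : (i < n)%N -> (j < n)%N -> i != j -> Dop i (Pop j p) = Pop j (Dop i p).
Proof.
move=> hi hj ne; apply/mpolyP => m; rewrite DopE // !PopE DopE //.
case: ifP => _; last by rewrite mul0r.
have ne' : j != i by rewrite eq_sym.
by rewrite mexpB mexpU' // (negbTE ne') subn0 mulrAC.
Qed.
End Idents.
Section Lin.
Variables (K : fieldType) (N : lmodType K).
Definition islin (f : N -> N) := forall a u v, f (a *: u + v) = a *: f u + f v.
Variable f : N -> N.
Hypothesis hf : islin f.
Lemma lin0 : f 0 = 0.
Proof.
have h := hf 1 0 0; rewrite scaler0 addr0 scale1r -{1}(addr0 (f 0)) in h.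
exact/esym/(addrI _ h).
Qed.
Lemma linD u v : f (u + v) = f u + f v.
Proof. by rewrite -{1}(scale1r u) hf scale1r. Qed.
Lemma linZ a u : f (a *: u) = a *: f u.
Proof. by rewrite -(addr0 (a *: u)) hf lin0 addr0. Qed.
Lemma linN u : f (- u) = - f u.
Proof. by rewrite -scaleN1r linZ scaleN1r. Qed.
Lemma linB u v : f (u - v) = f u - f v.
Proof. by rewrite linD linN. Qed.
Lemma lin_sum (I : Type) (r : seq I) (Pr : pred I) (F : I -> N) :
  f (\sum_(i <- r | Pr i) F i) = \sum_(i <- r | Pr i) f (F i).
Proof. exact: (big_morph f linD lin0). Qed.
End Lin.

Lemma islin_comp (K : fieldType) (N : lmodType K) (f g : N -> N) :
  islin f -> islin g -> islin (fun v => f (g v)).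
Proof. by move=> hf hg a u v; rewrite hg hf. Qed.

Section Kos.
Variables (K : fieldType) (N : lmodType K) (k : nat) (D L P : nat -> N -> N).
Hypotheses (linDh : forall i, (i < k)%N -> islin (D i))
  (linLh : forall i, (i < k)%N -> islin (L i))
  (linPh : forall i, (i < k)%N -> islin (P i)).
Hypotheses (DLh : forall j v, (j < k)%N -> D j (L j v) = v - P j v)
  (LDh : forall j v, (j < k)%N -> L j (D j v) = v)
  (PDh : forall j v, (j < k)%N -> P j (D j v) = 0)
  (DLch : forall i j v, (i < k)%N -> (j < k)%N -> i != j -> D i (L j v) = L j (D i v))
  (DPch : forall i j v, (i < k)%N -> (j < k)%N -> i != j -> D i (P j v) = P j (D i v)).

Fixpoint Pl t v := if t is t'.+1 then Pl t' (P t' v) else v.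

Lemma linPl t : (t <= k)%N -> islin (Pl t).
Proof.
elim: t => [|t IH] ht a u v //=.
by rewrite linPh ?IH //; lia.
Qed.

Lemma PlD j t v : (j < t)%N -> (t <= k)%N -> Pl t (D j v) = 0.
Proof.
elim: t v => [|t IH] v //= hjt htk.
case: (ltngtP j t) => h; last 2 first.
- lia.
- by subst; rewrite PDh ?lin0 //; apply: linPl; lia.
rewrite -DPch ?IH //; try lia.
Qed.

Lemma DPl j t v : (t <= j)%N -> (j < k)%N -> D j (Pl t v) = Pl t (D j v).
Proof.
elim: t v => [|t IH] v //= htj hjk.
by rewrite IH ?DPch //; try lia; rewrite neq_ltn orbC; apply/orP; left; lia.
Qed.

Lemma DPlL j v : (j < k)%N -> D j (Pl j (L j v)) = Pl j v - Pl j.+1 v.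
Proof.
move=> hj; rewrite DPl // DLh // linB //; apply: linPl; lia.
Qed.

Lemma tele t v : (t <= k)%N ->
  \sum_(j < k) (if (j < t)%N then Pl j v - Pl j.+1 v else 0) = v - Pl t v.
Proof.
elim: t => [|t IH] ht.
  by rewrite big1 ?subrr // => j _.
rewrite (eq_bigr (fun j : 'I_k => (if (j < t)%N then Pl j v - Pl j.+1 v else 0) +
     (if (j == t :> nat) then Pl t v - Pl t.+1 v else 0))); last first.
  move=> j _; rewrite ltnS leq_eqVlt; case: (ltngtP j t) => h /=.
  - by rewrite addr0.
  - by rewrite addr0.
  - by rewrite add0r h.
rewrite big_split /= IH; last lia.
rewrite -big_mkcond /= (big_pred1 (Ordinal ht)) /=; last by move=> j; rewrite /= -val_eqE.
rewrite addrA subrK //.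
Qed.

Definition tmin (T : {set 'I_k}) : option 'I_k := [pick j in T | [forall l in T, (j <= l)%N]].

Lemma tminS (T : {set 'I_k}) (t : 'I_k) : tmin T = Some t -> t \in T /\ (forall l, l \in T -> (t <= l)%N).
Proof.
rewrite /tmin; case: pickP => // j /andP[jT /forallP hj] [<-]; split => // l lT.
by have := hj l; rewrite lT.
Qed.

Lemma tminP (T : {set 'I_k}) (t : 'I_k) : t \in T -> (forall l, l \in T -> (t <= l)%N) -> tmin T = Some t.
Proof.
move=> tT ht; rewrite /tmin; case: pickP => [j /andP[jT /forallP hj]|none].
  congr Some; apply/val_inj/anti_leq; rewrite ht // andbT.
  by have := hj t; rewrite tT.
have := none t; rewrite tT /=; move/negbT/negP; case; apply/forallP => l.
by apply/implyP => /ht.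
Qed.

Lemma tmin0 : tmin set0 = None.
Proof. by rewrite /tmin; case: pickP => // j /andP[]; rewrite inE. Qed.

Lemma tmin_ex (T : {set 'I_k}) : T != set0 -> exists t, tmin T = Some t.
Proof.
case/set0Pn => j0 jT.
case: (arg_minnP (fun j : 'I_k => (j : nat)) jT) => t tT ht.
by exists t; apply: tminP.
Qed.

Definition phi : 'I_k -> N -> N := fun t => D t.

Definition Hop (x : kchain N k) : kchain N k :=
  [ffun T => if tmin T is Some t then Pl t (L t (x (T :\ t))) else 0].

Lemma linPL (t : 'I_k) : islin (fun v => Pl t (L t v)).
Proof. by apply: islin_comp; [apply: linPl; apply: ltnW|apply: linLh]. Qed.

Lemma Hop_deg i x : kdeg i x -> kdeg i.+1 (Hop x).
Proof.
move=> hx T hT; rewrite ffunE; case E: (tmin T) => [t|] //.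
have [tT _] := tminS E.
rewrite hx ?(lin0 (linPL t)) //.
move: hT; rewrite (cardsD1 t T) tT /=; apply: contra => /eqP ->; by rewrite add1n.
Qed.

Lemma Hop0 x T : x = 0 -> Hop x T = 0.
Proof.
move=> ->; rewrite ffunE; case: (tmin T) => // t.
by rewrite ffunE (lin0 (linPL t)).
Qed.

Lemma sign_step (T : {set 'I_k}) (t j : 'I_k) : t \in T -> (t < j)%N ->
  #|[set l in T | (l < j)%N]| = #|[set l in T :\ t | (l < j)%N]|.+1.
Proof.
move=> tT tj.
have -> : [set l in T | (l < j)%N] = t |: [set l in T :\ t | (l < j)%N].
  apply/setP => l; rewrite !inE; case: (eqVneq l t) => [->|] //=.
  by rewrite tT tj.
by rewrite cardsU1 !inE eqxx.
Qed.

Lemma homotopy x T : kdiff phi (Hop x) T + Hop (kdiff phi x) T =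
  x T - (if T == set0 then Pl k (x set0) else 0).
Proof.
case: (eqVneq T set0) => [->|Tne].
  rewrite [Hop _ set0]ffunE tmin0 addr0 ffunE -(tele (x set0) (leqnn k)).
  apply: eq_big => [j|j _]; first by rewrite inE.
  rewrite ltn_ord setU0 ffunE (@tminP [set j] j); last first.
  - by move=> l; rewrite inE => /eqP ->.
  - by rewrite set11.
  have -> : [set j] :\ j = set0 by rewrite setDv.
  have -> : [set l in (set0 : {set 'I_k}) | (l < j)%N] = set0.
    by apply/setP => l; rewrite !inE.
  by rewrite cards0 expr0 scale1r /phi DPlL.
have [t E] := tmin_ex Tne.
have [tT tle] := tminS E.
rewrite [Hop (kdiff phi x) T]ffunE E ffunE [kdiff phi x _]ffunE (lin_sum (linPL t)) subr0.
rewrite big_mkcond [X in _ + X]big_mkcond -big_split /=.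
rewrite (eq_bigr (fun j : 'I_k => (if (j < t)%N then Pl j (x T) - Pl j.+1 (x T) else 0) +
     (if (j == t :> nat) then Pl t (x T) else 0))); last first.
  move=> j _; case: (ltngtP j t) => hjt.
  - have jT : j \in T = false by apply/negbTE/negP => /tle; lia.
    have jT' : j \in T :\ t = false by rewrite in_setD1 jT andbF.
    rewrite jT jT' /= addr0.
    rewrite ffunE (@tminP (j |: T) j); last first.
    + by move=> l; rewrite in_setU1 => /orP[/eqP -> //|/tle]; lia.
    + by rewrite setU11.
    rewrite setU1K ?jT //.
    have -> : [set l in T | (l < j)%N] = set0.
      apply/setP => l; rewrite !inE; apply/negbTE; apply/negP => /andP[/tle]; lia.
    rewrite cards0 expr0 scale1r /phi DPlL //.
    rewrite (linZ (linLh (ltn_ord t))) (linZ (linPl (ltnW (ltn_ord t)))).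
    rewrite -DLch //; last by rewrite neq_ltn hjt.
    by rewrite PlD // ?scaler0 ?addr0 // ltnW.
  - have jt : (j != t) by rewrite -val_eqE /= neq_ltn hjt orbT.
    case: (boolP (j \in T)) => jT.
      by rewrite in_setD1 jT jt.
    rewrite in_setD1 (negbTE jT) jt /=.
    rewrite ffunE (@tminP (j |: T) t); last first.
    + by move=> l; rewrite in_setU1 => /orP[/eqP -> |/tle //]; lia.
    + by rewrite setU1r.
    have -> : j |: (T :\ t) = (j |: T) :\ t.
      by apply/setP => l; rewrite !inE; case: (eqVneq l j) => [->|_] /=; rewrite ?jt.

    rewrite (sign_step tT hjt) exprS mulN1r scaleNr /phi.
    rewrite DPl //; last exact: ltnW.
    rewrite DLch //.
    rewrite (linZ (linLh (ltn_ord t))) (linZ (linPl (ltnW (ltn_ord t)))).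
    by rewrite addNr addr0.
  - have jt : j = t by apply: val_inj.
    subst j; rewrite tT /= add0r setD11 /=.
    have -> : [set l in T :\ t | (l < t)%N] = set0.
      apply/setP => l; rewrite !inE; apply/negbTE; apply/negP => /andP[/andP[_ /tle]]; lia.
    by rewrite cards0 expr0 scale1r setD1K // /phi LDh // add0r.
rewrite big_split /= tele; last exact: ltnW.
rewrite -big_mkcond /= (big_pred1 t) /=; last by move=> j; rewrite /= -val_eqE.
by rewrite subrK.
Qed.

Lemma kos_vanish i : (0 < i)%N -> koszul_H_vanish phi i.
Proof.
move=> hi x hx dx0; exists (Hop x); split; first exact: Hop_deg.
apply/ffunP => T; have := homotopy x T.
rewrite (@Hop0 (kdiff phi x) T dx0) addr0 => ->.
case: eqP => [->|_]; last by rewrite subr0.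
by rewrite hx ?(lin0 (linPl (leqnn k))) ?subr0 // cards0 eq_sym -lt0n.
Qed.

Lemma kos_B0 v : koszul_B0 phi v <-> Pl k v = 0.
Proof.
split.
  case=> y [_ <-]; rewrite ffunE (lin_sum (linPl (leqnn k))) big1 // => j _.
  by rewrite (linZ (linPl (leqnn k))) /phi PlD // scaler0.
move=> hv; pose x0 : kchain N k := [ffun T => if T == set0 then v else 0].
have hx0 : kdeg 0 x0.
  move=> T; rewrite ffunE cards_eq0; by case: (T == set0).
exists (Hop x0); split; first exact: Hop_deg.
have := homotopy x0 set0; rewrite [Hop _ set0]ffunE tmin0 addr0 => ->.
by rewrite eqxx ffunE eqxx hv subr0.
Qed.
End Kos.

Section Trunc.
Variables (K : fieldType) (n c' : nat).

Definition trunc (m : 'X_{1..n}) : 'X_{1..c'} := [multinom mexp m i | i < c'].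
Definition ext (m : 'X_{1..c'}) : 'X_{1..n} := [multinom mexp m i | i < n].

Lemma mexp_trunc m i : mexp (trunc m) i = if (i < c')%N then mexp m i else 0%N.
Proof. by case: ltnP => h; [rewrite mexp_mk | rewrite mexp_out]. Qed.

Lemma mexp_ext m i : (i < n)%N -> mexp (ext m) i = mexp m i.
Proof. by move=> h; rewrite mexp_mk. Qed.

Definition tailz (m : 'X_{1..n}) : bool := [forall i : 'I_n, (c' <= i)%N ==> (mexp m i == 0%N)].

Lemma tailzP m : reflect (forall i, (c' <= i)%N -> mexp m i = 0%N) (tailz m).
Proof.
apply: (iffP forallP) => h i.
  move=> hi; case: (ltnP i n) => hn; last by rewrite mexp_out.
  by have := h (Ordinal hn); rewrite /= hi => /eqP.
by apply/implyP => hi; rewrite h.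
Qed.

Lemma tailz_ext m : tailz (ext m).
Proof.
apply/tailzP => i hi; case: (ltnP i n) => hn; last by rewrite mexp_out.
by rewrite mexp_ext // mexp_out.
Qed.

Lemma ext_trunc m : tailz m -> ext (trunc m) = m.
Proof.
move/tailzP => h; apply: mnm_ext => i hi; rewrite mexp_ext // mexp_trunc.
by case: ltnP => // /h ->.
Qed.

Definition fop (p : {mpoly K[n]}) : {mpoly K[c']} := shop (fun r => ((tailz r)%:R : K)) trunc p.

Lemma fop_cond m r : trunc r = m -> (tailz r)%:R != 0 :> K -> r = ext m.
Proof.
move=> <-; case: (boolP (tailz r)) => tr; [by rewrite ext_trunc | by rewrite /= eqxx].
Qed.

Lemma fop_lin : linear fop.
Proof. exact: (@shop_lin _ _ _ _ _ ext fop_cond). Qed.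
End Trunc.

HB.instance Definition _ (K : fieldType) (n c' : nat) :=
  GRing.isLinear.Build K {mpoly K[n]} {mpoly K[c']} _ (@fop K n c') (@fop_lin K n c').

Section Final.
Variables (K : fieldType) (n c' : nat).
Hypothesis hcn : (c' <= n)%N.

Lemma truncK : cancel (@ext n c') (@trunc n c').
Proof.
move=> m; apply: mnm_ext => i hi; rewrite mexp_trunc hi mexp_ext //.
exact: leq_trans hi hcn.
Qed.

Lemma fopE (p : {mpoly K[n]}) m : (fop c' p)@_m = p@_(ext n m).
Proof.
rewrite /fop (@shopE _ _ _ _ _ (@ext n c')); last exact: fop_cond.
by rewrite tailz_ext truncK eqxx !mulr1.
Qed.

Lemma fop_surj (w : {mpoly K[c']}) : exists v : {mpoly K[n]}, fop c' v = w.
Proof.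
exists (shop (fun _ => 1) (@ext n c') w); apply/mpolyP => m.
rewrite fopE (@shopE _ _ _ _ _ (@trunc n c')); last by move=> r <- _; rewrite truncK.
by rewrite truncK eqxx !mulr1.
Qed.

Lemma fop_X j (v : {mpoly K[n]}) : (j < c')%N -> fop c' (Xop j v) = Xop j (fop c' v).
Proof.
move=> hj; have hjn : (j < n)%N by apply: leq_trans hj hcn.
apply/mpolyP => m; rewrite fopE !XopE // fopE; congr (_@_ _).
by apply: mnm_ext => i hi; rewrite (@mexpD n) !mexp_ext // (@mexpD c') (mexpU' _ hjn) (mexpU' _ hj).
Qed.

Lemma fop_D j (v : {mpoly K[n]}) : (j < c')%N -> fop c' (Dop j v) = Dop j (fop c' v).
Proof.
move=> hj; have hjn : (j < n)%N by apply: leq_trans hj hcn.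
apply/mpolyP => m; rewrite fopE !DopE // mexp_ext //.
case: ifP => // _; rewrite fopE; congr (_@_ _ * _).
by apply: mnm_ext => i hi; rewrite (@mexpB n) !mexp_ext // (@mexpB c') (mexpU' _ hjn) (mexpU' _ hj).
Qed.

Variable k : nat.
Hypothesis hk : (c' + k)%N = n.

Definition PP := fun j => Pop (K:=K) (n:=n) (c' + j).

Lemma PlE t (v : {mpoly K[n]}) m :
  (Pl PP t v)@_m = v@_m * \prod_(j < t) ((mexp m (c' + j) == 0%N)%:R).
Proof.
elim: t v => [|t IH] v /=; first by rewrite big_ord0 mulr1.
by rewrite IH /PP PopE big_ord_recr /=; ring.
Qed.

Lemma PlK (v : {mpoly K[n]}) m : (Pl PP k v)@_m = if tailz c' m then v@_m else 0.
Proof.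
rewrite PlE; case E: (tailz c' m).
  by rewrite big1 ?mulr1 // => j _; move/tailzP: E => ->; rewrite ?leq_addr.
move/negbT: E; rewrite negb_forall => /existsP [i]; rewrite negb_imply => /andP[hi nz].
have hj : (i - c' < k)%N by move: (ltn_ord i); lia.
by rewrite (bigD1 (Ordinal hj)) //= subnKC // (negbTE nz) mul0r mulr0.
Qed.
End Final.

Theorem lemma2p2 (K : fieldType) (charK0 : [pchar K] =i pred0) (n c : nat)
    (hc1 : (1 <= c)%N) (hcn : (c <= n)%N) :
  (forall i : nat, (0 < i)%N -> koszul_H_vanish (@dfamily K n c) i) /\
  (exists f : {linear Emod K n -> Emod K c.-1},
     (forall w : Emod K c.-1, exists v : Emod K n, f v = w) /\
     (forall v : Emod K n, f v = 0 <-> koszul_B0 (@dfamily K n c) v) /\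
     (forall (j : nat) (v : Emod K n), (j < c.-1)%N ->
        f (@Xop K n j v) = @Xop K c.-1 j (f v) /\
        f (@Dop K n j v) = @Dop K c.-1 j (f v))).
Proof.
have hk : (c.-1 + (n - c).+1)%N = n by lia.
have hcn' : (c.-1 <= n)%N by lia.
pose k := (n - c).+1.
have hidx : forall j, (j < k)%N -> (c.-1 + j < n)%N by move=> j; rewrite /k; lia.
pose D := fun j => Dop (K:=K) (n:=n) (c.-1 + j).
pose L := fun j => Lop (K:=K) (n:=n) (c.-1 + j).
pose P := @PP K n c.-1.
have hL : forall i, (i < k)%N -> islin (L i) by move=> i hi a u v; apply: Lop_lin; apply: hidx.
have hP : forall i, (i < k)%N -> islin (P i) by move=> i hi a u v; apply: Pop_lin.
have hDL : forall j v, (j < k)%N -> D j (L j v) = v - P j v by move=> j v hj; apply: DL => //; apply: hidx.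
have hLD : forall j v, (j < k)%N -> L j (D j v) = v by move=> j v hj; apply: LD => //; apply: hidx.
have hPD : forall j v, (j < k)%N -> P j (D j v) = 0 by move=> j v hj; apply: PD => //; apply: hidx.
have hDLc : forall i j v, (i < k)%N -> (j < k)%N -> i != j -> D i (L j v) = L j (D i v).
  by move=> i j v hi hj ne; apply: DLc; rewrite ?hidx ?eqn_add2l.
have hDPc : forall i j v, (i < k)%N -> (j < k)%N -> i != j -> D i (P j v) = P j (D i v).
  by move=> i j v hi hj ne; apply: DPc; rewrite ?hidx ?eqn_add2l.
split.
  move=> i hi; exact: (kos_vanish hL hP hDL hLD hPD hDLc hDPc hi).
exists (GRing.Linear.clone _ _ _ _ (@fop K n c.-1) _).
split; first by move=> w; apply: fop_surj.
split; last by move=> j v hj; split; [apply: fop_X | apply: fop_D].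
move=> v; rewrite (kos_B0 hL hP hDL hLD hPD hDLc hDPc v).
split => h.
  have h' : fop c.-1 v = 0 := h.
  have z0 : forall m : 'X_{1..n}, mcoeff m (0 : Emod K n) = 0 by move=> m0; apply: mcoeff0.
  apply/mpolyP => m; rewrite (PlK _ hk) //; transitivity (0 : K); last by symmetry; apply: mcoeff0.
  case E: (tailz _ m) => //.
  by rewrite -(ext_trunc E) -fopE // h' mcoeff0.
change (fop c.-1 v = 0); apply/mpolyP => m; rewrite fopE // mcoeff0.
have := congr1 (mcoeff (ext n m)) h; rewrite (PlK _ hk) //.
rewrite (_ : tailz c.-1 (ext n m) = true); last exact: tailz_ext.
by move=> ->; apply: mcoeff0.
Qed.
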